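(* Let $G=(V,E)$ be a finite simple graph with $|E|=2|V|-3$. Then the graphic matroid of $G$ has a rainbow circuit-free coloring using each color at most twice if and only if $G$ can be constructed from $K_2$ (a single edge) by a sequence of (H0) operations.
   Context: The graphic matroid of $G$ has ground set $E$, independent sets being the edge sets of forests; its circuits are the edge sets of cycles. A coloring of $E$ is a partition into nonempty color classes; it is rainbow circuit-free if no cycle of $G$ has all its edges of pairwise different colors. The (H0) operation on a graph adds a new vertex $z$ together with edges $uz$ and $vz$, where $u,v$ are two distinct already existing vertices. *)

(* Defs.v *)
From mathcomp Require Import all_boot.
Set Implicit Arguments. Unset Strict Implicit. Unset Printing Implicit Defensive.

Section Graphs.
Variable T : finType.

(* A finite simple graph on vertex set T: e symmetric and irreflexive.
   Its edge set: the 2-element vertex sets {x,y} with e x y. *)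
Definition edges (e : rel T) : {set {set T}} :=
  [set A : {set T} | [exists x : T, exists y : T, e x y && (A == [set x; y])]].

Definition cycle_edges (s : seq T) : {set {set T}} :=
  [set [set x; next s x] | x in s].

Definition is_graph_cycle (e : rel T) (s : seq T) : Prop :=
  ucycle e s /\ 2 < size s.

(* A set of edges C is rainbow w.r.t. the colouring (partition) P:
   its edges have pairwise different colours. *)
Definition rainbow (P : {set {set {set T}}}) (C : {set {set T}}) : Prop :=
  forall B, B \in P -> #|B :&: C| <= 1.

(* Rainbow-circuit-free colouring of the graphic matroid of G:
   a partition of E(G) into nonempty classes with no rainbow cycle. *)
Definition rcf_coloring (e : rel T) (P : {set {set {set T}}}) : Prop :=
  partition P (edges e) /\
  forall s, is_graph_cycle e s -> ~ rainbow P (cycle_edges s).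

Definition colors_at_most_twice (P : {set {set {set T}}}) : Prop :=
  forall B, B \in P -> #|B| <= 2.

Inductive H0_constructible : {set T} -> {set {set T}} -> Prop :=
  | H0_K2 u v : u != v -> H0_constructible [set u; v] [set [set u; v]]
  | H0_step V E z u v :
      H0_constructible V E -> z \notin V -> u \in V -> v \in V -> u != v ->
      H0_constructible (z |: V) ([set z; u] |: ([set z; v] |: E)).

End Graphs.

(* Main.v *)
Require Import Defs.
From mathcomp Require Import all_boot.
From mathcomp Require Import zify.
Set Implicit Arguments. Unset Strict Implicit. Unset Printing Implicit Defensive.

Lemma path_iota (T : eqType) (r : rel T) (v : nat -> T) :
  (forall t, r (v t) (v t.+1)) ->
  forall k a, path r (v a) (map v (iota a.+1 k)).
Proof.
move=> hr; elim=> [|k IH] a //=.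
by rewrite hr IH.
Qed.

Lemma walk_cycle (T : finType) (r : rel T) (Q : pred T) (v : nat -> T) :
  (forall t, r (v t) (v t.+1)) -> (forall t, v t.+1 != v t) ->
  (forall t, v t.+2 != v t) -> (forall t, Q (v t)) ->
  exists s, [/\ uniq s, 2 < size s, {in s, forall x, r x (next s x)}
             & {in s, forall x, Q x}].
Proof.
move=> hr h1 h2 hQ.
pose f := fun i : 'I_(#|T|.+1) => v i.
have: ~~ injectiveb f.
  apply/injectiveP => inj; have := leq_card f inj.
  by rewrite card_ord ltnn.
case/injectivePn => i0 [j0 nij fij].
pose P := fun j => [exists i : 'I_j, v i == v j].
have exP : exists j, P j.
  case: (ltngtP i0 j0) => [lt|lt|eq]; last by move/eqP: nij; case; apply: val_inj.
  - by exists j0; apply/existsP; exists (Ordinal lt); rewrite /f in fij; rewrite /= fij.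
  - by exists i0; apply/existsP; exists (Ordinal lt); rewrite /f in fij; rewrite /= fij.
case: (ex_minnP exP) => j /existsP [[i /= lij] /eqP vij] jmin.
pose m := j - i.
pose s := map v (iota i m).
have Hmin : forall a b, a < b -> b < j -> v a != v b.
  move=> a b ab bj; apply/negP => /eqP vab.
  have : P b by apply/existsP; exists (Ordinal ab); rewrite vab.
  by move/jmin; rewrite leqNgt bj.
exists s; split.
- rewrite map_inj_in_uniq ?iota_uniq // => a b; rewrite !mem_iota => /andP [ia aj] /andP [ib bj] vab.
  case: (ltngtP a b) => // [ab|ba].
  + have bj' : b < j by rewrite /m in bj; lia.
    by move: (Hmin a b ab bj'); rewrite vab eqxx.
  + have aj' : a < j by rewrite /m in aj; lia.
    by move: (Hmin b a ba aj'); rewrite vab eqxx.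
- rewrite size_map size_iota /m.
  case E: (j - i) => [|[|[|k]]] //; first lia.
  + have ej : j = i.+1 by lia.
    by move: (h1 i); rewrite -ej vij eqxx.
  + have ej : j = i.+2 by lia.
    by move: (h2 i); rewrite -ej vij eqxx.
- have hc : cycle r s.
    have m0 : m = m.-1.+1 by rewrite /m; lia.
    rewrite /s m0 /=.
    have -> : rcons (map v (iota i.+1 m.-1)) (v i) = map v (iota i.+1 m.-1.+1).
      rewrite (_ : m.-1.+1 = m.-1 + 1); last lia. rewrite iotaD map_cat cats1 /=.
      have -> : i.+1 + m.-1 = j by rewrite /m; lia.
      by rewrite vij.
    exact: path_iota.
  by move=> x xs; apply: next_cycle.
- by move=> x /mapP [t _ ->].
Qed.

Section G.
Variable T : finType.
Variable e : rel T.
Hypothesis e_sym : symmetric e.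
Hypothesis e_irr : irreflexive e.

Lemma edgesP A : reflect (exists x y, e x y /\ A = [set x; y]) (A \in edges e).
Proof.
rewrite /edges inE; apply: (iffP existsP) => [[x /existsP [y /andP [exy /eqP ->]]]|[x [y [exy ->]]]].
  by exists x, y.
by exists x; apply/existsP; exists y; rewrite exy eqxx.
Qed.

Lemma edge_rel x y a b : e a b -> [set x; y] = [set a; b] -> e x y.
Proof.
move=> eab H.
have xab : x \in [set a; b] by rewrite -H !inE eqxx.
have yab : y \in [set a; b] by rewrite -H !inE eqxx orbT.
have axy : a \in [set x; y] by rewrite H !inE eqxx.
have bxy : b \in [set x; y] by rewrite H !inE eqxx orbT.
have nab : a != b by apply/negP => /eqP ab; move: eab; rewrite ab e_irr.
move: xab yab axy bxy; rewrite !inE.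
case/orP=> /eqP -> ; case/orP => /eqP -> //.
- by rewrite !orbb => _ /eqP ba; move: nab; rewrite ba eqxx.
- by rewrite e_sym.
- by rewrite !orbb => /eqP ab; move: nab; rewrite ab eqxx.
Qed.

Lemma edge_neq x y : [set x; y] \in edges e -> x != y.
Proof.
case/edgesP => a [b [eab H]]; apply/negP => /eqP exy.
by move: (edge_rel eab H); rewrite exy e_irr.
Qed.

Lemma edge_card (W : {set T}) A : A \in edges e -> A \subset W -> 1 < #|W|.
Proof.
case/edgesP => a [b [eab ->]] sub.
have ab : a != b by apply/negP => /eqP ab; move: eab; rewrite ab e_irr.
by apply: leq_trans (subset_leq_card sub); rewrite cards2 ab.
Qed.

Lemma cycle_of_edges (F : {set {set T}}) s :
  {subset F <= edges e} -> uniq s -> 2 < size s ->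
  {in s, forall x, [set x; next s x] \in F} ->
  is_graph_cycle e s /\ cycle_edges s \subset F.
Proof.
move=> FE us ss hs; split; last first.
  by apply/subsetP => A /imsetP [x xs ->]; apply: hs.
split => //; rewrite /ucycle us andbT.
apply: cycle_from_next => // x xs.
by case/edgesP: (FE _ (hs x xs)) => a [b [eab H]]; apply: edge_rel eab H.
Qed.

Lemma forest (W : {set T}) (F : {set {set T}}) :
  {subset F <= edges e} -> (forall A, A \in F -> A \subset W) ->
  0 < #|F| -> #|W| <= #|F| ->
  exists s, is_graph_cycle e s /\ cycle_edges s \subset F.
Proof.
have [n] := ubnP #|W|; elim: n W F => // n IH W F Wn FE FW F0 WF.
case: (boolP [exists z in W, #|[set A in F | z \in A]| <= 1]).
  case/exists_inP => z zW dz.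
  set Dz := [set A in F | z \in A] in dz.
  have [A0 A0F] : exists A0, A0 \in F by apply/card_gt0P.
  have W2 := edge_card (FE _ A0F) (FW _ A0F).
  have cW : #|W| = #|W :\ z|.+1 by rewrite (cardsD1 z W) zW.
  have cF : #|F| <= #|F :\: Dz|.+1.
    rewrite cardsD.
    have : #|F :&: Dz| <= 1 by apply: leq_trans (subset_leq_card (subsetIr _ _)) dz.
    lia.
  have [|||||s [cs sub]] := IH (W :\ z) (F :\: Dz).
  - lia.
  - by move=> A /setDP [AF _]; apply: FE.
  - move=> A /setDP [AF]; rewrite inE AF /= => zA.
    apply/subsetP => x xA; rewrite !inE (subsetP (FW _ AF) _ xA) andbT.
    by apply: contraNneq zA => <-.
  - lia.
  - lia.
  by exists s; split => //; apply: subset_trans sub (subsetDl _ _).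
rewrite negb_exists => /forallP hdeg.
have deg2 : forall z p, z \in W -> exists w, ([set z; w] \in F) && (w != p).
  move=> z p zW; move: (hdeg z); rewrite zW /= -ltnNge.
  case/card_gt1P => A1 [A2 [] ]; rewrite !inE => /andP [A1F zA1] /andP [A2F zA2] A12.
  have getw : forall A, A \in F -> z \in A -> exists w, A = [set z; w].
    move=> A AF zA; case/edgesP: (FE _ AF) => a [b [eab HA]].
    move: zA; rewrite HA !inE => /orP [] /eqP ->; first by exists b.
    by exists a; rewrite setUC.
  case: (getw _ A1F zA1) => w1 e1; case: (getw _ A2F zA2) => w2 e2.
  case: (eqVneq w1 p) => [w1p|w1p]; last by exists w1; rewrite -e1 A1F.
  case: (eqVneq w2 p) => [w2p|w2p]; last by exists w2; rewrite -e2 A2F.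
  by move: A12; rewrite e1 e2 w1p w2p eqxx.
have [A0 A0F] : exists A0, A0 \in F by apply/card_gt0P.
case/edgesP: (FE _ A0F) => x0 [y0 [exy0 eA0]].
pose nxt p c := odflt c [pick w | ([set c; w] \in F) && (w != p)].
pose st := fun t => iter t (fun q : T * T => (q.2, nxt q.1 q.2)) (x0, y0).
have inv : forall t, [set (st t).1; (st t).2] \in F.
  elim=> [|t IHt]; first by rewrite /= -eA0.
  rewrite [st t.+1]/st iterS -/(st t) /=.
  have cW : (st t).2 \in W by apply: (subsetP (FW _ IHt)); rewrite !inE eqxx orbT.
  rewrite /nxt; case: pickP => [w /andP [] //|].
  by case: (deg2 _ (st t).1 cW) => w hw /(_ w); rewrite hw.
pose v := fun t => (st t).1.
have hv1 : forall t, v t.+1 = (st t).2 by [].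
have W1 : forall t, (fun x y => [set x; y] \in F) (v t) (v t.+1).
  by move=> t; rewrite hv1; apply: inv.
have W2 : forall t, v t.+1 != v t.
  move=> t; rewrite hv1 eq_sym; apply: edge_neq; apply: FE; apply: inv.
have W3 : forall t, v t.+2 != v t.
  move=> t; rewrite /v.
  have -> : st t.+2 = ((st t.+1).2, nxt (st t.+1).1 (st t.+1).2) by rewrite /st iterS.
  have -> : st t.+1 = ((st t).2, nxt (st t).1 (st t).2) by rewrite /st iterS.
  rewrite /=.
  have cW : (st t).2 \in W by apply: (subsetP (FW _ (inv t))); rewrite !inE eqxx orbT.
  rewrite /nxt; case: pickP => [w /andP [] //|].
  by case: (deg2 _ (st t).1 cW) => w hw /(_ w); rewrite hw.
have [s [us ss hs _]] := @walk_cycle T (fun x y => [set x; y] \in F) predT v W1 W2 W3 (fun _ => isT).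
exists s; apply: cycle_of_edges => //.
Qed.


Definition rc_free (E : {set {set T}}) (P : {set {set {set T}}}) :=
  forall s, is_graph_cycle e s -> cycle_edges s \subset E -> ~ rainbow P (cycle_edges s).

Lemma transversal (E : {set {set T}}) (P : {set {set {set T}}}) (q : pred {set T}) :
  partition P E -> (forall B, B \in P -> exists2 A, A \in B & q A) ->
  exists F : {set {set T}}, [/\ #|F| = #|P|, F \subset E,
    (forall A, A \in F -> q A) & (forall B, B \in P -> #|B :&: F| <= 1)].
Proof.
move=> pP hq.
pose pk (B : {set {set T}}) := odflt set0 [pick A in B | q A].
have pkP : forall B, B \in P -> pk B \in B /\ q (pk B).
  move=> B BP; rewrite /pk; case: pickP => [A /andP [] //|].
  by case: (hq B BP) => A AB qA /(_ A); rewrite AB qA.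
have tP := partition_trivIset pP.
have pkB : forall B B', B \in P -> B' \in P -> pk B' \in B -> B' = B.
  move=> B B' BP B'P inB.
  by rewrite -(def_pblock tP BP inB) (def_pblock tP B'P (pkP _ B'P).1).
exists (pk @: P); split.
- rewrite card_in_imset // => B1 B2 B1P B2P eq12.
  by apply: esym; apply: pkB => //; rewrite -eq12; apply: (pkP _ B1P).1.
- apply/subsetP => A /imsetP [B BP ->].
  exact: (subsetP (partitionS pP BP)) _ (pkP _ BP).1.
- by move=> A /imsetP [B BP ->]; apply: (pkP _ BP).2.
- move=> B BP; apply/card_le1_eqP => x y.
  rewrite !inE => /andP [xB /imsetP [B1 B1P ex]] /andP [yB /imsetP [B2 B2P ey]].
  have e1 : B1 = B by apply: pkB => //; rewrite -ex.
  have e2 : B2 = B by apply: pkB => //; rewrite -ey.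
  by rewrite ex ey e1 e2.
Qed.

Lemma trans_bound (E : {set {set T}}) (P : {set {set {set T}}}) (q : pred {set T})
  (W : {set T}) :
  {subset E <= edges e} -> partition P E -> rc_free E P ->
  (forall B, B \in P -> exists2 A, A \in B & q A) ->
  (forall A, A \in E -> q A -> A \subset W) -> 0 < #|P| -> #|P| < #|W|.
Proof.
move=> EE pP hrc hq EW P0.
have [F [cF FE qF BF]] := transversal pP hq.
rewrite ltnNge; apply/negP => WP.
have [||||s [cs sub]] := @forest W F.
- by move=> A AF; apply: EE; apply: (subsetP FE).
- by move=> A AF; apply: EW; [apply: (subsetP FE) | apply: qF].
- by rewrite cF.
- by rewrite cF.
apply: (hrc s cs (subset_trans sub FE)) => B BP.
apply: leq_trans (BF B BP); apply: subset_leq_card; exact: setIS.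
Qed.

End G.

Section M.
Variable T : finType.
Variable e : rel T.
Hypothesis e_sym : symmetric e.
Hypothesis e_irr : irreflexive e.
Variable V : {set T}.
Variable E : {set {set T}}.
Variable P : {set {set {set T}}}.
Hypothesis hEE : {subset E <= edges e}.
Hypothesis hEV : forall A, A \in E -> A \subset V.
Hypothesis pP : partition P E.
Hypothesis h2 : forall B, B \in P -> #|B| <= 2.
Hypothesis hrc : rc_free e E P.
Hypothesis hc : #|E| + 3 = 2 * #|V|.

Lemma two_in_edge A x y : A \in edges e -> x \in A -> y \in A -> x != y -> A = [set x; y].
Proof.
case/edgesP => a [b [eab ->]] xA yA xy.
apply/eqP; rewrite eq_sym eqEcard; apply/andP; split.
  by apply/subsetP => w /set2P [] ->.
by rewrite !cards2 xy; case: (a != b).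
Qed.

Lemma sumE : #|E| = \sum_(B in P) #|B|.
Proof. exact: card_partition. Qed.

Lemma cardP : #|V| = #|P|.+1.
Proof.
have le1 : #|E| <= 2 * #|P|.
  rewrite sumE mulnC -sum_nat_const; apply: leq_sum => B BP; exact: h2.
have P0 : 0 < #|P| by lia.
have := @trans_bound T e e_sym e_irr E P predT V hEE pP hrc.
move=> /(_ _ _ P0) H.
have lt : #|P| < #|V|.
  apply: H.
  - move=> B BP; have /card_gt0P [A AB] : 0 < #|B| by rewrite card_gt0 (partition_neq0 pP BP).
    by exists A.
  - by move=> A AE _; apply: hEV.
lia.
Qed.

Lemma single_uniq B1 B2 : B1 \in P -> B2 \in P -> #|B1| = 1 -> #|B2| = 1 -> B1 = B2.
Proof.
move=> B1P B2P c1 c2; apply/eqP; apply/negPn/negP => n12.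
have hs : \sum_(B in P) #|B| + \sum_(B in P) (#|B| == 1) <= \sum_(B in P) 2.
  rewrite -big_split /=; apply: leq_sum => B BP; have := h2 BP.
  by case: (#|B|) => [|[|[|]]].
have hs2 : 2 <= \sum_(B in P) (#|B| == 1).
  rewrite (bigD1 B1) //= (bigD1 B2) /=; last by rewrite B2P eq_sym n12.
  by rewrite c1 c2.
have hc' := hc; rewrite cardP in hc'.
move: hs; rewrite sum_nat_const -sumE.
lia.
Qed.


Definition delta z := [set A : {set T} | z \in A].
Definition own z := odflt set0 [pick B in P | B \subset delta z].

Lemma P0 : 0 < #|P|.
Proof. have := cardP; lia. Qed.

Lemma own_spec z : z \in V -> own z \in P /\ own z \subset delta z.
Proof.
move=> zV; rewrite /own; case: pickP => [B /andP [BP sub] //|none].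
exfalso.
have c1 : #|V :\ z| = #|P| by have := cardsD1 z V; rewrite zV cardP; lia.
suff : #|P| < #|V :\ z| by rewrite c1 ltnn.
apply: (@trans_bound T e e_sym e_irr E P (fun A => z \notin A) (V :\ z) hEE pP hrc); last exact: P0.
- move=> B BP; have := none B; rewrite BP /= => /subsetPn [A AB].
  by rewrite inE => zA; exists A.
- move=> A AE zA; apply/subsetP => w wA; rewrite !inE (subsetP (hEV AE) _ wA) andbT.
  by apply: contraNneq zA => <-.
Qed.

Lemma collide x y B : x != y -> B \in P -> B \subset delta x -> B \subset delta y ->
  B = [set [set x; y]].
Proof.
move=> xy BP sx sy.
have eA : forall A, A \in B -> A = [set x; y].
  move=> A AB; apply: two_in_edge => //.
  - by apply: hEE; apply: (subsetP (partitionS pP BP)).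
  - by have := subsetP sx _ AB; rewrite inE.
  - by have := subsetP sy _ AB; rewrite inE.
have /card_gt0P [A0 A0B] : 0 < #|B| by rewrite card_gt0 (partition_neq0 pP BP).
apply/eqP; rewrite eqEcard cards1 card_gt0 (partition_neq0 pP BP) andbT.
by apply/subsetP => A AB; rewrite inE (eA _ AB).
Qed.

Lemma exists_collision : exists x y, [/\ x \in V, y \in V, x != y & own x = own y].
Proof.
case: (boolP [exists x in V, exists y in V, (x != y) && (own x == own y)]).
  case/exists_inP => x xV /exists_inP [y yV /andP [xy /eqP oxy]].
  by exists x, y.
rewrite negb_exists_in => /forall_inP hn; exfalso.
have inj : {in V &, injective own}.
  move=> a b aV bV oab; apply/eqP; apply/negP => /negP nab.
  by have := hn a aV; rewrite negb_exists_in => /forall_inP /(_ b bV); rewrite nab oab eqxx.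
have := card_in_imset inj.
have : own @: V \subset P by apply/subsetP => B /imsetP [z zV ->]; exact: (own_spec zV).1.
by move/subset_leq_card => le ceq; rewrite ceq in le; move: le; rewrite cardP ltnn.
Qed.


Lemma getw A z : A \in edges e -> z \in A -> exists2 w, w != z & A = [set z; w].
Proof.
move=> AE zA; have := AE; case/edgesP => a [b [eab HA]].
move: zA; rewrite HA !inE => /orP [] /eqP ez.
- exists b; last by rewrite ez.
  by rewrite ez; apply/negP => /eqP ba; move: eab; rewrite ba e_irr.
- exists a; last by rewrite ez setUC.
  by rewrite ez; apply/negP => /eqP ba; move: eab; rewrite ba e_irr.
Qed.

Lemma find_good : 2 < #|V| -> exists z w1 w2, z \in V /\ [/\ w1 \in V :\ z, w2 \in V :\ z,
  w1 != w2, [set [set z; w1]; [set z; w2]] \in P &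
  [set [set z; w1]; [set z; w2]] = [set A in E | z \in A]].
Proof.
move=> V3.
have [x [y [xV yV xy oxy]]] := exists_collision.
set s0 := own x.
have s0P : s0 \in P := (own_spec xV).1.
have s0e : s0 = [set [set x; y]].
  apply: collide xy s0P (own_spec xV).2 _.
  by rewrite /s0 oxy; exact: (own_spec yV).2.
have c0 : #|s0| = 1 by rewrite s0e cards1.
set R := V :\: [set x; y].
have RV : forall z, z \in R -> z \in V by move=> z; rewrite inE => /andP [].
have Rxy : forall z, z \in R -> z \notin [set x; y] by move=> z; rewrite inE => /andP [].
have own_ne : forall z, z \in R -> own z != s0.
  move=> z zR; apply/negP => /eqP oz.
  have : [set x; y] \in own z by rewrite oz s0e inE.
  move/(subsetP (own_spec (RV _ zR)).2); rewrite inE => zin.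
  by move: (Rxy _ zR); rewrite zin.
have own_inj : {in R &, injective own}.
  move=> a b aR bR oab; apply/eqP; apply/negP => /negP nab.
  have ea : own a = [set [set a; b]].
    apply: collide nab (own_spec (RV _ aR)).1 (own_spec (RV _ aR)).2 _.
    by rewrite oab; exact: (own_spec (RV _ bR)).2.
  have := single_uniq (own_spec (RV _ aR)).1 s0P _ c0.
  rewrite ea cards1 => /(_ erefl) => ea0.
  by move: (own_ne _ aR); rewrite ea ea0 eqxx.
have cR : #|R| = #|P :\ s0|.
  have := cardsD1 s0 P; rewrite s0P.
  rewrite /R [#|V :\: _|]cardsD.
  have -> : V :&: [set x; y] = [set x; y].
    by apply/setIidPr; apply/subsetP => w /set2P [] ->.
  rewrite cards2 xy cardP add1n => h.
  by rewrite h; change (nat_of_bool true) with 1; rewrite !subSS subn0.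
have imR : own @: R = P :\ s0.
  apply/eqP; rewrite eqEcard card_in_imset // cR leqnn andbT.
  apply/subsetP => B /imsetP [z zR ->].
  by rewrite !inE own_ne // (own_spec (RV _ zR)).1.
have ownE : forall B, B \in P -> B != s0 -> exists2 w, w \in R & B = own w.
  move=> B BP Bs0; have : B \in P :\ s0 by rewrite !inE Bs0 BP.
  by rewrite -imR => /imsetP [w wR ->]; exists w.
have R0 : 0 < #|R|.
  rewrite cR; have h := cardsD1 s0 P; rewrite s0P add1n in h.
  by move: V3; rewrite cardP h.
case: (boolP [exists z in R, [forall A in E, (z \in A) ==> (A \in own z)]]).
  case/exists_inP => z zR /forall_inP hz.
  have zV := RV _ zR.
  set D := own z.
  have [DP Dd] := own_spec zV.
  have DE : D \subset E := partitionS pP DP.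
  have Deq : D = [set A in E | z \in A].
    apply/setP => A; rewrite inE; apply/idP/idP.
      by move=> AD; rewrite (subsetP DE _ AD) /=; have := subsetP Dd _ AD; rewrite inE.
    by case/andP => AE zA; apply: (implyP (hz A AE)).
  have cD : #|D| = 2.
    have := h2 DP; have : 0 < #|D| by rewrite card_gt0 (partition_neq0 pP DP).
    case E1 : #|D| => [|[|[|]]] //.
    have := single_uniq DP s0P E1 c0 => eD.
    by move: (own_ne _ zR); rewrite eD eqxx.
  have /cards2P [A1 [A2 [A12 eD]]] : #|D| == 2 by rewrite cD.
  have A1D : A1 \in D by rewrite eD !inE eqxx.
  have A2D : A2 \in D by rewrite eD !inE eqxx orbT.
  have zA1 : z \in A1 by have := subsetP Dd _ A1D; rewrite inE.
  have zA2 : z \in A2 by have := subsetP Dd _ A2D; rewrite inE.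
  have [w1 w1z e1] := getw (hEE (subsetP DE _ A1D)) zA1.
  have [w2 w2z e2] := getw (hEE (subsetP DE _ A2D)) zA2.
  have w1V : w1 \in V by apply: (subsetP (hEV (subsetP DE _ A1D))); rewrite e1 !inE eqxx orbT.
  have w2V : w2 \in V by apply: (subsetP (hEV (subsetP DE _ A2D))); rewrite e2 !inE eqxx orbT.
  exists z, w1, w2; split => //; split => //.
  - by rewrite !inE w1z.
  - by rewrite !inE w2z.
  - by apply: contraNneq A12 => w12; rewrite e1 e2 w12.
  - by rewrite -e1 -e2 -eD.
  - by rewrite -e1 -e2 -eD.
rewrite negb_exists_in => /forall_inP hbad.
have gex : forall z, z \in R -> exists w, [&& w \in R, w != z & [set z; w] \in own w].
  move=> z zR; move: (hbad z zR); rewrite negb_forall_in => /exists_inP [A AE].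
  rewrite negb_imply => /andP [zA nA].
  have Acov : A \in cover P by rewrite (cover_partition pP).
  set B := pblock P A.
  have BP : B \in P := pblock_mem Acov.
  have AB : A \in B by rewrite /B mem_pblock.
  have Bs0 : B != s0.
    apply/negP => /eqP Bs; move: AB; rewrite Bs s0e inE => /eqP eA.
    by move: (Rxy _ zR); rewrite -eA zA.
  have [w wR Bw] := ownE _ BP Bs0.
  have wA : w \in A by have := subsetP (own_spec (RV _ wR)).2 A; rewrite -Bw inE; apply.
  have wz : w != z by apply: contraNneq nA => wz; rewrite -wz -Bw.
  exists w; rewrite wR wz /=.
  by rewrite -(two_in_edge (hEE AE) zA wA) ?Bw -?Bw // eq_sym.
pose g z := odflt z [pick w | [&& w \in R, w != z & [set z; w] \in own w]].
have gP : forall z, z \in R -> [&& g z \in R, g z != z & [set z; g z] \in own (g z)].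
  move=> z zR; rewrite /g; case: pickP => [w //|none].
  by case: (gex z zR) => w; rewrite none.
have [z0 z0R] : exists z0, z0 \in R by apply/card_gt0P.
pose v t := iter t g z0.
have vR : forall t, v t \in R.
  by elim=> [|t IH] //; rewrite /v iterS -/(v t); case/and3P: (gP _ IH).
have vS : forall t, v t.+1 = g (v t) by move=> t; rewrite /v iterS.
have W1 : forall t, (fun a b => [set a; b] \in own b) (v t) (v t.+1).
  by move=> t; rewrite vS; case/and3P: (gP _ (vR t)).
have W2 : forall t, v t.+1 != v t.
  by move=> t; rewrite vS; case/and3P: (gP _ (vR t)).
have W3 : forall t, v t.+2 != v t.
  move=> t; apply/negP => /eqP h.
  have e1 : [set v t; v t.+1] \in own (v t.+1) := W1 t.
  have e2 : [set v t.+1; v t.+2] \in own (v t.+2) := W1 t.+1.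
  rewrite h setUC in e2.
  have tP := partition_trivIset pP.
  have o1 := (own_spec (RV _ (vR t.+1))).1.
  have o2 := (own_spec (RV _ (vR t))).1.
  have := def_pblock tP o1 e1; rewrite (def_pblock tP o2 e2) => /own_inj.
  by move=> /(_ (vR _) (vR _)) eq; move: (W2 t); rewrite eq eqxx.
have [s [us ss hs sR]] := @walk_cycle T (fun a b => [set a; b] \in own b) (fun a => a \in R) v W1 W2 W3 vR.
have hsE : {in s, forall a, [set a; next s a] \in E}.
  move=> a As; have := hs a As; apply: (subsetP (partitionS pP _)).
  by apply: (own_spec (RV _ _)).1; apply: sR; rewrite mem_next.
have [cs sub] := cycle_of_edges e_sym e_irr hEE us ss hsE.
exfalso; apply: (hrc cs sub) => B BP.
apply/card_le1_eqP => A1 A2; rewrite !inE => /andP [A1B /imsetP [a1 a1s ea1]] /andP [A2B /imsetP [a2 a2s ea2]].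
subst A1 A2.
have tP := partition_trivIset pP.
have n1 : next s a1 \in R by apply: sR; rewrite mem_next.
have n2 : next s a2 \in R by apply: sR; rewrite mem_next.
have b1 := def_pblock tP BP A1B; rewrite (def_pblock tP (own_spec (RV _ n1)).1 (hs _ a1s)) in b1.
have b2 := def_pblock tP BP A2B; rewrite (def_pblock tP (own_spec (RV _ n2)).1 (hs _ a2s)) in b2.
have := own_inj _ _ n1 n2; rewrite b1 b2 => /(_ erefl) en.
by have := prev_next us a1; rewrite en prev_next // => ->.
Qed.

End M.

Lemma setU_D (U : finType) (A B : {set U}) : A \subset B -> A :|: (B :\: A) = B.
Proof.
move=> sub; apply/setP => x; rewrite !inE.
by case: (boolP (x \in A)) => xA //=; rewrite (subsetP sub _ xA).
Qed.

Lemma fwd (T : finType) (e : rel T) (e_sym : symmetric e) (e_irr : irreflexive e) :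
  forall n (V : {set T}) (E : {set {set T}}) (P : {set {set {set T}}}), #|V| = n -> {subset E <= edges e} ->
  (forall A, A \in E -> A \subset V) -> partition P E ->
  (forall B, B \in P -> #|B| <= 2) -> rc_free e E P -> #|E| + 3 = 2 * #|V| ->
  H0_constructible V E.
Proof.
elim=> [|n IH] V E P cV hEE hEV pP h2 hrc hc; first by lia.
case: (ltnP 2 #|V|) => V3.
  have [z [w1 [w2 [zV [w1V w2V w12 DP Deq]]]]] := find_good e_sym e_irr hEE hEV pP h2 hrc hc V3.
  set D := [set [set z; w1]; [set z; w2]] in DP Deq.
  have DE : D \subset E by rewrite Deq; apply/subsetP => A; rewrite inE => /andP [].
  have w1z : w1 != z by move: w1V; rewrite !inE => /andP [].
  have w2z : w2 != z by move: w2V; rewrite !inE => /andP [].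
  have cD : #|D| = 2.
    rewrite cards2; suff -> : [set z; w1] != [set z; w2] by [].
    apply/negP => /eqP h; have : w1 \in [set z; w2] by rewrite -h !inE eqxx orbT.
    by rewrite !inE (negbTE w1z) (negbTE w12).
  have cE : #|E :\: D| = #|E| - 2.
    by rewrite cardsD (setIidPr DE) cD.
  have H := IH (V :\ z) (E :\: D) (P :\ D).
  have H' : H0_constructible (V :\ z) (E :\: D).
    apply: H.
    - by have := cardsD1 z V; rewrite zV cV add1n => -[].
    - by move=> A /setDP [AE _]; apply: hEE.
    - move=> A /setDP [AE AD].
      have zA : z \notin A by apply: contra AD => zA; rewrite Deq inE AE.
      apply/subsetP => w wA; rewrite !inE (subsetP (hEV _ AE) _ wA) andbT.
      by apply: contraNneq zA => <-.
    - exact: partitionD1.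
    - by move=> B /setD1P [_ BP]; apply: h2.
    - move=> s cs sub rb; case: (hrc _ cs (subset_trans sub (subsetDl _ _))) => B BP.
      case: (eqVneq B D) => [->|BD]; last by apply: rb; rewrite !inE BD.
      suff -> : D :&: cycle_edges s = set0 by rewrite cards0.
      apply/setP => A; rewrite !inE; apply/negP => /andP [AD AC].
      by have := subsetP sub _ AC; rewrite !inE AD.
    - have := cardsD1 z V; rewrite zV cV add1n => -[] <-.
      rewrite cE; move: hc; rewrite cV; lia.
  have := H0_step H' (negbT (setD11 z V)) w1V w2V w12.
  rewrite setD1K // setUA.
  by rewrite (setU_D DE).
have V2 : #|V| = 2 by lia.
have /cards1P [A eA] : #|E| == 1 by apply/eqP; lia.
have AE : A \in E by rewrite eA inE.
have /edgesP [a [b [eab HA]]] := hEE _ AE.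
have ab : a != b by apply/negP => /eqP ab; move: eab; rewrite ab e_irr.
have eV : V = [set a; b].
  apply/eqP; rewrite eq_sym eqEcard; apply/andP; split.
    by rewrite -HA; apply: hEV.
  by rewrite V2 cards2 ab.
by rewrite eV eA HA; apply: H0_K2.
Qed.

Lemma next_next_neq (U : eqType) (s : seq U) x :
  uniq s -> 2 < size s -> x \in s -> next s (next s x) != x.
Proof.
move=> us ss xs; case: (rot_to xs) => i p hr.
have ur : uniq (x :: p) by rewrite -hr rot_uniq.
have sr : 2 < size (x :: p) by rewrite -hr size_rot.
rewrite -(next_rot i us) -(next_rot i us) hr.
case: p hr ur sr => [|y [|w q]] // hr ur sr.
move: ur; rewrite /= !inE => /andP [/norP [xy /norP [xw xq]] /andP [/norP [yw yq] _]].
rewrite /next /= eqxx /= [y == x]eq_sym (negbTE xy) /= eqxx.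
by rewrite eq_sym.
Qed.


Lemma bwd (T : finType) (V : {set T}) (E : {set {set T}}) :
  H0_constructible V E ->
  (forall A, A \in E -> A \subset V) /\
  exists P : {set {set {set T}}}, [/\ partition P E, (forall B, B \in P -> #|B| <= 2) &
    forall s, uniq s -> 2 < size s -> cycle_edges s \subset E -> ~ rainbow P (cycle_edges s)].
Proof.
elim=> [u v uv | {}V {}E z u v H [EV [P [pP h2 hr]]] zV uV vV uv].
  split.
    by move=> A; rewrite inE => /eqP ->.
  exists [set [set [set u; v]]]; split.
  - rewrite /partition cover1 trivIset1 eqxx /= inE.
    by apply/eqP => /setP /(_ [set u; v]); rewrite !inE eqxx.
  - by move=> B; rewrite inE => /eqP ->; rewrite cards1.
  - move=> s us ss sub _.
    have : {subset s <= [:: u; v]}.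
      move=> x xs; have : [set x; next s x] \in [set [set u; v]].
        by apply: (subsetP sub); apply/imsetP; exists x.
      move/set1P => h; have : x \in [set u; v] by rewrite -h !inE eqxx.
      by rewrite !inE.
    by move/(uniq_leq_size us); rewrite leqNgt ss.
set D := [set [set z; u]; [set z; v]].
have zEV : forall A, A \in E -> z \notin A.
  by move=> A AE; apply: contra zV => zA; apply: (subsetP (EV _ AE)).
have inD : forall A, A \in [set z; u] |: ([set z; v] |: E) -> z \in A -> A \in D.
  move=> A; rewrite !inE => /orP [->//|/orP [->|AE]]; first by rewrite orbT.
  by move=> zA; move: (zEV _ AE); rewrite zA.
split.
  move=> A; rewrite !inE => /orP [/eqP ->|/orP [/eqP ->|AE]].
  - by apply/subsetP => x /set2P [] ->; rewrite !inE ?eqxx ?uV ?orbT.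
  - by apply/subsetP => x /set2P [] ->; rewrite !inE ?eqxx ?vV ?orbT.
  - by apply: subset_trans (EV _ AE) (subsetUr _ _).
exists (D |: P); split.
- rewrite setUA; apply: partitionU1 pP _ _.
    by apply/eqP => /setP /(_ [set z; u]); rewrite !inE eqxx.
  rewrite disjoints_subset; apply/subsetP => A AD; rewrite inE; apply/negP => AE.
  have zA : z \in A by move: AD; rewrite !inE => /orP [] /eqP ->; rewrite !inE eqxx.
  by move: (zEV _ AE); rewrite zA.
- move=> B /setU1P [->|BP]; last exact: h2.
  by rewrite cards2; case: (_ != _).
- move=> s us ss sub rb.
  case: (boolP (z \in s)) => zs.
    set n := next s z; set p := prev s z.
    have np : next s p = z by rewrite /p next_prev.
    have A1C : [set z; n] \in cycle_edges s by apply/imsetP; exists z.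
    have A2C : [set p; z] \in cycle_edges s by apply/imsetP; exists p; rewrite ?mem_prev ?np.
    have A1D : [set z; n] \in D by apply: inD; [apply: (subsetP sub) | rewrite !inE eqxx].
    have A2D : [set p; z] \in D by apply: inD; [apply: (subsetP sub) | rewrite !inE eqxx orbT].
    have := rb D (setU11 _ _); move/card_le1_eqP => /(_ [set z; n] [set p; z]).
    rewrite !in_setI A1D A2D A1C A2C => /(_ isT isT) h.
    have : n \in [set p; z] by rewrite h !inE eqxx orbT.
    have nn := next_next_neq us ss zs.
    rewrite !inE => /orP [] /eqP hn.
    + by move: nn; rewrite -/n hn np eqxx.
    + by move: nn; rewrite -/n hn -/n hn eqxx.
  apply: (hr s us ss).
    apply/subsetP => A AC; have := subsetP sub _ AC.
    move: AC => /imsetP [x xs ->]; rewrite !inE.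
    case/orP => [/eqP h|/orP [/eqP h|//]].
    + have : z \in [set x; next s x] by rewrite h !inE eqxx.
      by rewrite !inE => /orP [] /eqP ezx; move: zs; rewrite ezx ?mem_next xs.
    + have : z \in [set x; next s x] by rewrite h !inE eqxx.
      by rewrite !inE => /orP [] /eqP ezx; move: zs; rewrite ezx ?mem_next xs.
  by move=> B BP; apply: rb; rewrite !inE BP orbT.
Qed.

Theorem theorem10 (T : finType) (e : rel T)
  (e_sym : symmetric e) (e_irr : irreflexive e)
  (hcard : #|edges e| + 3 = 2 * #|T|) :
  (exists P : {set {set {set T}}}, rcf_coloring e P /\ colors_at_most_twice P)
  <-> H0_constructible [set: T] (edges e).
Proof.
split.
  case=> P [[pP rc] h2].
  apply: (fwd e_sym e_irr (erefl _) _ _ pP h2 _ _).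
  - by [].
  - by move=> A _; apply: subsetT.
  - by move=> s cs _; apply: rc.
  - by rewrite cardsT.
move=> H; have [_ [P [pP h2 hr]]] := bwd H.
exists P; split => //; split => // s [/andP [cs us] ss].
apply: hr => //; apply/subsetP => A /imsetP [x xs ->].
rewrite /edges inE; apply/existsP; exists x; apply/existsP; exists (next s x).
by rewrite (next_cycle cs xs) eqxx.
Qed.
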